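(* Let $r\ge 2$, $n\ge1$ and $\underline m=(m_0,m_1,m_2,m_3)\in\mathbb N^4$ with $\gcd(m_\ell,r)=n$ for a single $\ell\in\{0,1,2,3\}$ and $\gcd(m_i,r)=1$ for $i\ne\ell$. Let $t\in\{0,\dots,n-1\}$. (1) If $i<\ell$, the number of admissible paths from $(v_i,0)$ to $(v_\ell,t)$ all of whose vertices lie in levels $i$ and $\ell$ is $\frac rn$. (2) If $i>\ell$, the number of admissible paths from $(v_\ell,t)$ to $(v_i,0)$ all of whose vertices lie in levels $\ell$ and $i$ is $\frac rn$.
   Context: Let $r\ge 2$ and $N\ge 0$ be integers and $\underline m=(m_0,\dots,m_N)\in\mathbb N^{N+1}$. The skew product graph $L_{2N+1}\times_{\underline m}\mathbb Z_r$ is the directed graph with vertices $(v_i,k)$, $0\le i\le N$, $k\in\mathbb Z_r=\{0,1,\dots,r-1\}$, and edges $(e_{ij},k)$ for $0\le i\le j\le N$, $k\in\mathbb Z_r$, the edge $(e_{ij},k)$ having source $(v_i,k-m_i \bmod r)$ and range $(v_j,k)$. The vertices $(v_i,k)$, $k\in\mathbb Z_r$, form level $i$. A vertex $(v_l,k)$ is called distinguished if $0\le k<\gcd(m_l,r)$. For distinguished vertices $(v_i,s),(v_j,t)$, an admissible path from $(v_i,s)$ to $(v_j,t)$ is a finite path of positive length in the skew product graph with source $(v_i,s)$ and range $(v_j,t)$ none of whose vertices other than its source and range is distinguished. Here $N=3$. *)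

(* Defs.v *)
From mathcomp Require Import all_boot.
Set Implicit Arguments. Unset Strict Implicit. Unset Printing Implicit Defensive.

(* Skew product graph L_{2N+1} x_m Z_r with N = 3.
   Levels are 'I_4 ; the Z_r coordinate is a nat k with k < r.
   A vertex (v_i,k) is the pair (i,k); an edge (e_ij,k) is the triple (i,j,k). *)

Definition vertex := ('I_4 * nat)%type.
Definition edge := ('I_4 * 'I_4 * nat)%type.

Section Skew.
Variables (r : nat) (m : 'I_4 -> nat).

Definition is_edge (e : edge) : bool :=
  let: (i, j, k) := e in (i <= j) && (k < r).

(* source of (e_ij,k) is (v_i, k - m_i mod r) *)
Definition esrc (e : edge) : vertex :=
  let: (i, j, k) := e in (i, (k + (r - m i %% r)) %% r).

Definition erng (e : edge) : vertex :=
  let: (i, j, k) := e in (j, k).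

Definition distinguished (v : vertex) : bool := v.2 < gcdn (m v.1) r.

Fixpoint composable (p : seq edge) : bool :=
  match p with
  | e1 :: ((e2 :: _) as q) => (erng e1 == esrc e2) && composable q
  | _ => true
  end.

Definition is_path (p : seq edge) : bool :=
  [&& size p > 0, all is_edge p & composable p].

Definition psrc (p : seq edge) (dflt : vertex) : vertex :=
  if p is e :: _ then esrc e else dflt.
Definition prng (p : seq edge) (dflt : vertex) : vertex := last dflt (map erng p).

Definition pverts (p : seq edge) : seq vertex :=
  if p is e :: _ then esrc e :: map erng p else [::].

Definition pinterior (p : seq edge) : seq vertex := take (size p).-1 (map erng p).

Definition admissible (u v : vertex) (p : seq edge) : bool :=
  [&& is_path p, psrc p u == u, prng p u == v,
      distinguished u, distinguished v &
      ~~ has distinguished (pinterior p)].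

Definition in_levels (a b : 'I_4) (p : seq edge) : bool :=
  all (fun w : vertex => (w.1 == a) || (w.1 == b)) (pverts p).

End Skew.

Definition card_is (P : seq edge -> Prop) (c : nat) : Prop :=
  exists s : seq (seq edge), [/\ uniq s, forall p, p \in s <-> P p & size s = c].

(* Main.v *)
Require Import Defs.
From mathcomp Require Import all_boot zify.
Set Implicit Arguments. Unset Strict Implicit. Unset Printing Implicit Defensive.

Section Gen.
Variables (r : nat) (m : 'I_4 -> nat).
Hypothesis r_gt0 : 0 < r.

Definition step (L : 'I_4) (y : nat) := (y + m L) %% r.

Fixpoint lp (L : 'I_4) (y : nat) (c : nat) : seq edge :=
  if c is c'.+1 then (L, L, step L y) :: lp L (step L y) c' else [::].

Fixpoint chain (v : vertex) (p : seq edge) : bool :=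
  if p is e :: p' then [&& is_edge r e, esrc r m e == v & chain (erng e) p'] else true.

Lemma aux_mod (a : nat) : r - a %% r + a = (a %/ r).+1 * r.
Proof.
have h1 := divn_eq a r. have h2 : a %% r < r by rewrite ltn_pmod.
rewrite mulSn. lia.
Qed.

Lemma esrc_stepK i y : y < r -> ((step i y) + (r - m i %% r)) %% r = y.
Proof.
move=> hy; rewrite /step modnDml -addnA [m i + _]addnC aux_mod addnC modnMDl.
exact: modn_small.
Qed.

Lemma step_src i k : k < r -> step i ((k + (r - m i %% r)) %% r) = k.
Proof.
move=> hk; rewrite /step modnDml -addnA aux_mod addnC modnMDl.
exact: modn_small.
Qed.

Lemma step_lt L y : step L y < r.
Proof. by rewrite /step ltn_pmod. Qed.

Lemma iter_lt L c y : y < r -> iter c (step L) y < r.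
Proof. by case: c => [|c] //= _; apply: step_lt. Qed.

Lemma iter_step L c y : y < r -> iter c (step L) y = (y + c * m L) %% r.
Proof.
move=> hy; elim: c => [|c IH]; first by rewrite mul0n addn0 (modn_small hy).
by rewrite iterS IH /step modnDml mulSn; congr (_ %% _); lia.
Qed.

Lemma step_inj L a b : a < r -> b < r -> step L a = step L b -> a = b.
Proof.
by move=> ha hb e; rewrite -(esrc_stepK L ha) -(esrc_stepK L hb) e.
Qed.

Lemma iter_inj L k a b : a < r -> b < r -> iter k (step L) a = iter k (step L) b -> a = b.
Proof.
elim: k a b => [|k IH] a b ha hb //.
rewrite !iterSr => /IH h. apply: step_inj ha hb _. exact: h (step_lt _ _) (step_lt _ _).
Qed.

Lemma lp_size L y c : size (lp L y c) = c.
Proof. by elim: c y => [|c IH] y //=; rewrite IH. Qed.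

Lemma lp_chain L y c : y < r -> chain (L, y) (lp L y c).
Proof.
elim: c y => [|c IH] y hy //=.
rewrite /is_edge leqnn step_lt /= esrc_stepK // eqxx /=. exact: IH (step_lt _ _).
Qed.

Lemma lp_last L y c v : last v (map erng (lp L y c)) = if c is 0 then v else (L, iter c (step L) y).
Proof.
elim: c y v => [|c IH] y v //=. rewrite IH. by case: c {IH} => [|c] //; rewrite -iterS -iterSr.
Qed.

Lemma lp_map L y c : map erng (lp L y c) = [seq (L, iter q.+1 (step L) y) | q <- iota 0 c].
Proof.
elim: c y => [|c IH] y //=. rewrite IH -[1]/(1 + 0) iotaDl -map_comp.
congr (_ :: _); apply: eq_map => q /=. by rewrite add0n -iterSr.
Qed.

Lemma lp_cnt (B : 'I_4) L y c : count (fun e : edge => e.1.2 == B) (lp L y c) = (L == B) * c.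
Proof. elim: c y => [|c IH] y //=; first by rewrite muln0. by rewrite IH mulnS. Qed.

Lemma lp_lvl L y c : all (fun v : vertex => v.1 == L) (map erng (lp L y c)).
Proof. by elim: c y => [|c IH] y //=; rewrite eqxx IH. Qed.

Lemma chain_cat u p1 p2 : chain u (p1 ++ p2) = chain u p1 && chain (last u (map erng p1)) p2.
Proof. elim: p1 u => [|e p1 IH] u //=. by rewrite IH !andbA. Qed.

Lemma comp_chain e p : composable r m (e :: p) && all (is_edge r) (e :: p) = is_edge r e && chain (erng e) p.
Proof.
elim: p e => [|e2 p IH] e1; first by rewrite /= andbT.
have -> : composable r m [:: e1, e2 & p] = (erng e1 == esrc r m e2) && composable r m (e2::p) by [].
move: (IH e2); move: (composable r m (e2::p)) => C /=.
rewrite [esrc r m e2 == _]eq_sym.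
by case: (erng e1 == esrc r m e2); case: (is_edge r e1); case: (is_edge r e2);
  case: C; case: (all (is_edge r) p) => //= ->.
Qed.

Lemma chain_path u p : (is_path r m p && (psrc r m p u == u)) = (0 < size p) && chain u p.
Proof.
case: p => [|e p] //. rewrite /is_path. move: (comp_chain e p).
move: (composable r m (e::p)) (all (is_edge r) (e::p)) => C Al H /=.
by move: H; case: C; case: Al; case: (is_edge r e); case: (esrc r m e == u); case: (chain (erng e) p).
Qed.

Lemma pverts_chain u p : chain u p -> 0 < size p -> pverts r m p = u :: map erng p.
Proof. by case: p => [|e p] //= /and3P [_ /eqP -> _]. Qed.


Lemma lp_last' L y c : last (L, y) (map erng (lp L y c)) = (L, iter c (step L) y).
Proof. by rewrite lp_last; case: c. Qed.

Lemma take_lp L x b : take b ((L, x) :: map erng (lp L x b)) = [seq (L, iter q (step L) x) | q <- iota 0 b].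
Proof.
elim: b x => [|b IH] x //=. rewrite IH -[1]/(1 + 0) iotaDl -map_comp.
congr (_ :: _); apply: eq_map => q /=. by rewrite add0n -iterS iterSr.
Qed.

Section Two.
Variables (A B : 'I_4) (s0 e : nat).
Hypotheses (AB : A < B) (s0r : s0 < r) (er : e < r)
  (dA : distinguished r m (A, s0)) (dB : distinguished r m (B, e)).

Local Notation fA := (step A).
Local Notation fB := (step B).

Definition Pth' y a b := lp A y a ++ (A, B, iter a.+1 fA y) :: lp B (iter a.+1 fA y) b.

Lemma AneB : (A == B) = false.
Proof. apply/negP => /eqP h; move: AB; by rewrite h ltnn. Qed.

Lemma decompB y p : y < r -> chain (B, y) p ->
  all (fun v : vertex => (v.1 == A) || (v.1 == B)) (map erng p) -> p = lp B y (size p).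
Proof.
elim: p y => [|[[i j] k] p IH] y hy //=.
case/and3P => /andP [hij hk] /eqP [hi hk'] hc /andP [hj hall].
subst i. have hkB : k = step B y by rewrite -hk' step_src.
subst k. have hjB : j = B.
  case/orP: hj => /eqP hj //. subst j. by move: hij; rewrite leqNgt AB.
subst j. congr (_ :: _). exact: IH (step_lt _ _) hc hall.
Qed.

Lemma decomp y p : y < r -> chain (A, y) p ->
  all (fun v : vertex => (v.1 == A) || (v.1 == B)) (map erng p) ->
  (last (A, y) (map erng p)).1 == B -> exists a b, p = Pth' y a b.
Proof.
elim: p y => [|[[i j] k] p IH] y hy /=; first by rewrite AneB.
case/and3P => /andP [hij hk] /eqP [hi hk'] hc /andP [hj hall] hl.
subst i. have hkA : k = step A y by rewrite -hk' step_src.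
subst k. case/orP: hj => /eqP hj; subst j.
- have [a [b hp]] := IH _ (step_lt _ _) hc hall hl.
  exists a.+1, b. rewrite hp /Pth' /=. by rewrite -iterSr iterS.
- exists 0, (size p). rewrite /Pth' /=. congr (_ :: _). exact: decompB (step_lt _ _) hc hall.
Qed.

Lemma Pth_chain y a b : y < r -> chain (A, y) (Pth' y a b).
Proof.
move=> hy. rewrite /Pth' chain_cat lp_chain // lp_last' /=.
rewrite (ltnW AB) step_lt esrc_stepK ?iter_lt // eqxx /=.
exact: lp_chain (step_lt _ _).
Qed.

Lemma Pth_last y a b v : last v (map erng (Pth' y a b)) = (B, iter b fB (iter a.+1 fA y)).
Proof. by rewrite /Pth' map_cat last_cat /= lp_last'. Qed.

Lemma Pth_size y a b : size (Pth' y a b) = a + b.+1.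
Proof. by rewrite /Pth' size_cat /= !lp_size. Qed.

Lemma Pth_int y a b : pinterior (Pth' y a b) =
  [seq (A, iter q.+1 fA y) | q <- iota 0 a] ++ [seq (B, iter q fB (iter a.+1 fA y)) | q <- iota 0 b].
Proof.
rewrite /pinterior Pth_size /Pth' map_cat lp_map addnS /= take_cat size_map size_iota.
rewrite ltnNge leq_addr /= addKn. by rewrite take_lp.
Qed.

Lemma Pth_lvl y a b : all (fun v : vertex => (v.1 == A) || (v.1 == B)) (map erng (Pth' y a b)).
Proof.
rewrite /Pth' map_cat all_cat /= eqxx orbT /=.
rewrite (sub_all _ (lp_lvl A y a)) ?(sub_all _ (lp_lvl B _ b)) //.
- by move=> v /eqP ->; rewrite eqxx orbT.
- by move=> v /eqP ->; rewrite eqxx.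
Qed.

Lemma Pth_inj y a b a' b' : Pth' y a b = Pth' y a' b' -> a = a' /\ b = b'.
Proof.
move=> h.
have hc : forall a b, count (fun e : edge => e.1.2 == B) (Pth' y a b) = b.+1.
  by move=> a1 b1; rewrite /Pth' count_cat /= !lp_cnt AneB eqxx mul0n mul1n.
have eb : b = b' by have := hc a b; rewrite h hc; case.
subst b'. split => //. have := Pth_size y a b. rewrite h Pth_size. lia.
Qed.


Definition condA a := ~~ has (fun q => distinguished r m (A, iter q.+1 fA s0)) (iota 0 a).
Definition condB x b := ~~ has (fun q => distinguished r m (B, iter q fB x)) (iota 0 b).
Definition xa a := iter a.+1 fA s0.

Lemma charP p : admissible r m (A, s0) (B, e) p && in_levels r m A B p <->
  exists a b, [/\ p = Pth' s0 a b, condA a, condB (xa a) b & iter b fB (xa a) = e].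
Proof.
split.
- case/andP => hadm hin. move: hadm; rewrite /admissible andbA chain_path.
  case/and5P => /andP [hsz hch] hlast _ _ hint.
  move: hin; rewrite /in_levels (pverts_chain hch hsz) /= => /andP [_ hall].
  have hl : (last (A, s0) (map erng p)).1 == B by move: hlast; rewrite /prng => /eqP ->.
  have [a [b hp]] := decomp s0r hch hall hl.
  subst p. exists a, b. move: hlast hint; rewrite /prng Pth_last Pth_int has_cat negb_or !has_map.
  move=> /eqP [he] /andP [h1 h2]. by split.
- case=> a [b [-> hA hB he]].
  rewrite /admissible andbA chain_path Pth_size addnS ltn0Sn Pth_chain //=.
  rewrite /prng Pth_last -/(xa a) he eqxx dA dB /=.
  rewrite /in_levels (pverts_chain (Pth_chain a b s0r)) ?Pth_size ?addnS //= eqxx Pth_lvl andbT.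
  by rewrite Pth_int has_cat negb_or !has_map orTb andbT; apply/andP; split.
Qed.

Lemma uniqA_lt a a' : a < a' -> condA a' -> xa a = xa a' -> False.
Proof.
move=> lt ha' hx.
have e1 : a'.+1 = a.+1 + (a' - a) by lia.
move: hx; rewrite /xa e1 iterD => /(iter_inj s0r (iter_lt _ _ s0r)) hs.
move/hasPn: ha' => /(_ (a' - a).-1); rewrite mem_iota add0n.
have -> : (a' - a).-1.+1 = a' - a by lia.
rewrite -hs dA. move/(_ _)/negP; apply; lia.
Qed.

Lemma uniqA a a' : condA a -> condA a' -> xa a = xa a' -> a = a'.
Proof.
move=> ha ha' hx; case: (ltngtP a a') => // h.
- by case: (uniqA_lt h ha' hx).
- by case: (uniqA_lt h ha (esym hx)).
Qed.

Lemma uniqB_lt x b b' : b < b' -> condB x b' -> iter b fB x = e -> False.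
Proof.
move=> lt hb he. move/hasPn: hb => /(_ b); rewrite mem_iota add0n lt he dB.
by move/(_ isT).
Qed.

Lemma uniqB x b b' : condB x b -> condB x b' -> iter b fB x = e -> iter b' fB x = e -> b = b'.
Proof.
move=> hb hb' he he'; case: (ltngtP b b') => // h.
- by case: (uniqB_lt h hb' he).
- by case: (uniqB_lt h hb he').
Qed.

Lemma exA x : (forall c, distinguished r m (A, iter c fA s0) -> iter c fA s0 = s0) ->
  (exists d, 0 < d /\ iter d fA s0 = x) -> exists a, condA a /\ xa a = x.
Proof.
move=> HA hex.
have hex' : exists d, (0 < d) && (iter d fA s0 == x).
  by case: hex => d [h1 h2]; exists d; rewrite h1 h2 eqxx.
case: (ex_minnP hex') => d /andP [d0 /eqP hd] hmin.
exists d.-1. rewrite /xa prednK //. split => //.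
apply/hasPn => q; rewrite mem_iota add0n => /andP [_ hq]. apply/negP => hdist.
have h := HA _ hdist.
have : d <= d - q.+1.
  apply: hmin. apply/andP; split; first by lia.
  have hq' : q.+1 <= d by lia.
  by rewrite -{1}h -iterD subnK // hd.
lia.
Qed.

Lemma exB x : (forall c, distinguished r m (B, iter c fB x) -> iter c fB x = e) ->
  (exists b, iter b fB x = e) -> exists b, condB x b /\ iter b fB x = e.
Proof.
move=> HB hex.
have hex' : exists b, iter b fB x == e by case: hex => b hb; exists b; rewrite hb.
case: (ex_minnP hex') => b /eqP hb hmin.
exists b; split => //.
apply/hasPn => q; rewrite mem_iota add0n => /andP [_ hq]. apply/negP => hdist.
have := hmin q (introT eqP (HB _ hdist)). lia.
Qed.


Section Count.
Variable X : seq nat.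
Hypotheses
  (HA : forall c, distinguished r m (A, iter c fA s0) -> iter c fA s0 = s0)
  (HB : forall x, x \in X -> forall c, distinguished r m (B, iter c fB x) -> iter c fB x = e)
  (HXa : forall a b, iter b fB (xa a) = e -> xa a \in X)
  (HXb : forall x, x \in X -> (exists d, 0 < d /\ iter d fA s0 = x) /\ (exists b, iter b fB x = e))
  (uX : uniq X).

Definition Q (Y : seq nat) p := exists a b,
  [/\ p = Pth' s0 a b, condA a, condB (xa a) b, iter b fB (xa a) = e & xa a \in Y].

Lemma countQ Y : uniq Y -> {subset Y <= X} ->
  exists s, [/\ uniq s, forall p, p \in s <-> Q Y p & size s = size Y].
Proof.
elim: Y => [|y Y IH] /=.
  move=> _ _; exists [::]; split => // p; split => //.
  by case=> a [b [_ _ _ _]]; rewrite in_nil.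
move=> /andP [yY uY] sub.
have [s [us hs ss]] := IH uY (fun x hx => sub x (mem_behead (hx : x \in behead (y :: Y)))).
have yX : y \in X := sub y (mem_head _ _).
have [[d hd] [b0 hb0]] := HXb yX.
have [a [ha hxa]] := exA HA (ex_intro _ d hd).
have [b [hb hbe]] := exB (HB yX) (ex_intro _ b0 hb0).
rewrite -hxa in hb hbe.
exists (Pth' s0 a b :: s). split.
- rewrite /= us andbT. apply/negP => /hs [a' [b' [hp ha' hb' he' hY]]].
  case: (Pth_inj hp) => ea eb. subst a' b'. by move: hY; rewrite hxa (negbTE yY).
- move=> p; rewrite inE; split.
  + case/orP => [/eqP -> | /hs [a' [b' [hp ha' hb' he' hY]]]].
      by exists a, b; split => //; rewrite hxa mem_head.
    by exists a', b'; split => //; rewrite inE hY orbT.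
  + case=> a' [b' [-> ha' hb' he' hY]]. rewrite inE in hY. case/orP: hY => [/eqP hy | hY].
      have ea : a' = a := uniqA ha' ha (etrans hy (esym hxa)).
      subst a'. have eb : b' = b := uniqB hb' hb he' hbe.
      by subst b'; rewrite eqxx.
    apply/orP; right; apply/hs. by exists a', b'.
- by rewrite /= ss.
Qed.

Lemma card_gen : card_is (fun p => admissible r m (A, s0) (B, e) p && in_levels r m A B p) (size X).
Proof.
have [s [us hs ss]] := countQ uX (fun x h => h).
exists s; split => // p. rewrite hs charP. split.
- by case=> a [b [? ? ? ? _]]; exists a, b.
- case=> a [b [hp ha hb he]]; exists a, b; split => //. exact: HXa he.
Qed.

End Count.

End Two.
End Gen.
Lemma modD_cong r a b b' : b %% r = b' %% r -> (a + b) %% r = (a + b') %% r.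
Proof. by move=> h; rewrite -modnDmr h modnDmr. Qed.

Lemma modM_cong r a b b' : b %% r = b' %% r -> (a * b) %% r = (a * b') %% r.
Proof. by move=> h; rewrite -modnMmr h modnMmr. Qed.

Lemma bez r a : 0 < r -> exists v, (v * a) %% r = gcdn a r %% r.
Proof.
move=> r0. have [b _ hd] := Bezoutr a r0.
have [k hk] : exists k, r.-1 * (gcdn a r + b * a) = k * r.
  by apply/dvdnP; apply: dvdn_mull.
exists (b * r.-1).
have E : b * r.-1 * a + gcdn a r * r = k * r + gcdn a r.
  have hr : r = r.-1 + 1 by lia.
  move: hk; move: (r.-1) hr => p hr; rewrite hr; lia.
have := congr1 (modn^~ r) E; rewrite /= modnMDl [_ + gcdn a r * r]addnC modnMDl.
done.
Qed.

Theorem lemma3p2 (r n : nat) (m : 'I_4 -> nat) (ell : 'I_4) (t : nat) :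
  2 <= r -> 1 <= n ->
  gcdn (m ell) r = n ->
  (forall i : 'I_4, i != ell -> gcdn (m i) r = 1) ->
  t < n ->
  (forall i : 'I_4, i < ell ->
     card_is (fun p => admissible r m (i, 0) (ell, t) p && in_levels r m i ell p)
             (r %/ n)) /\
  (forall i : 'I_4, ell < i ->
     card_is (fun p => admissible r m (ell, t) (i, 0) p && in_levels r m ell i p)
             (r %/ n)).
Proof.
move=> r2 n1 hg hco tn.
have r0 : 0 < r by lia.
have nr : n %| r by rewrite -hg dvdn_gcdr.
have nm : n %| m ell by rewrite -hg dvdn_gcdl.
have nler : n <= r := dvdn_leq r0 nr.
have tr : t < r by lia.
have Rn : r %/ n * n = r := divnK nr.
set X := [seq t + q * n | q <- iota 0 (r %/ n)].
have sX : size X = r %/ n by rewrite size_map size_iota.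
have uX : uniq X.
  rewrite map_inj_uniq ?iota_uniq // => q1 q2 h.
  have h2 : q1 * n = q2 * n by lia.
  move/eqP: h2; rewrite eqn_mul2r; case/orP => [/eqP n0|/eqP //]; lia.
have memX : forall x, x \in X = (x < r) && (x %% n == t).
  move=> x; apply/mapP/andP.
  - case=> q; rewrite mem_iota add0n => /andP [_ hq] ->.
    have h1 : q.+1 * n <= r %/ n * n by rewrite leq_mul2r hq orbT.
    rewrite Rn mulSn in h1. split; first by lia.
    by rewrite addnC modnMDl modn_small.
  - case=> hx /eqP hxt. exists (x %/ n).
      by rewrite mem_iota add0n /= ltn_divLR // Rn.
    by rewrite {1}(divn_eq x n) hxt addnC.
have orb : forall x c, x < r -> iter c (step r m ell) x %% n = x %% n.
  move=> x c hx; rewrite iter_step // modn_dvdm // -(divnK nm) mulnA addnC modnMDl //.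
have orbd : forall x c, x < r -> x %% n = t -> distinguished r m (ell, iter c (step r m ell) x) ->
    iter c (step r m ell) x = t.
  move=> x c hx hxt; rewrite /distinguished /= hg => hlt.
  by rewrite -hxt -(orb x c hx) modn_small.
have d1 : forall i : 'I_4, i != ell -> forall y, distinguished r m (i, y) -> y = 0.
  move=> i hi y; rewrite /distinguished /= hco //; lia.
have di : forall i : 'I_4, i != ell -> distinguished r m (i, 0).
  by move=> i hi; rewrite /distinguished /= hco.
have dl : distinguished r m (ell, t) by rewrite /distinguished /= hg.
have [u hu] := bez (m ell) r0.
rewrite hg in hu.
have unit : forall i : 'I_4, i != ell -> exists w, (w * m i) %% r = 1 %% r.
  move=> i hi. have [w hw] := bez (m i) r0. exists w. by rewrite hw hco.
split.
- move=> i hi. have hne : i != ell by apply/eqP => h; move: hi; rewrite h ltnn.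
  rewrite -sX. apply: (card_gen r0 hi r0 tr (di i hne) dl).
  + move=> c /(d1 i hne) //.
  + move=> x; rewrite memX => /andP [hx /eqP hxt] c. exact: orbd.
  + move=> a b hb. have hx : xa r m i 0 a < r by apply: iter_lt.
    rewrite memX hx /=. apply/eqP. by rewrite -(orb _ b hx) hb modn_small.
  + move=> x; rewrite memX => /andP [hx /eqP hxt]. split.
    * have [w hw] := unit i hne. exists (w * x + r). split; first by lia.
      rewrite iter_step // add0n.
      have E : (w * x + r) * m i = m i * r + x * (w * m i) by lia.
      by rewrite E modnMDl (modM_cong x hw) muln1 modn_small.
    * set q := x %/ n. have hq : q < r %/ n by rewrite ltn_divLR // Rn.
      have hxq : x = t + q * n by rewrite {1}(divn_eq x n) hxt addnC.
      have hle : q * n <= r by rewrite -Rn leq_mul2r ltnW ?orbT.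
      exists (u * (r %/ n - q)). rewrite iter_step //.
      rewrite mulnAC [u * m ell * _]mulnC (modD_cong x (modM_cong _ hu)).
      rewrite mulnBl Rn.
      have -> : x + (r - q * n) = t + r by lia.
      by rewrite modnDr modn_small.
  + exact: uX.
- move=> i hi. have hne : i != ell by apply/eqP => h; move: hi; rewrite h ltnn.
  rewrite -sX. apply: (card_gen r0 hi tr r0 dl (di i hne)).
  + move=> c; exact: orbd t c tr (modn_small tn).
  + by move=> x _ c /(d1 i hne).
  + move=> a b _. have hx : xa r m ell t a < r by apply: iter_lt.
    rewrite memX hx /=; apply/eqP. by rewrite /xa orb // modn_small.
  + move=> x; rewrite memX => /andP [hx /eqP hxt]. split.
    * set q := x %/ n.
      have hxq : x = t + q * n by rewrite {1}(divn_eq x n) hxt addnC.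
      exists (u * q + r). split; first by lia. rewrite iter_step //.
      have E : t + (u * q + r) * m ell = m ell * r + (t + q * (u * m ell)) by lia.
      by rewrite E modnMDl (modD_cong t (modM_cong q hu)) -hxq modn_small.
    * have [w hw] := unit i hne. exists (w * (r - x)).
      rewrite iter_step // mulnAC [w * m i * _]mulnC (modD_cong x (modM_cong _ hw)) muln1.
      rewrite subnKC ?modnn //; lia.
  + exact: uX.
Qed.
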